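(* If the Markov chain $\mathcal{M}$ is started from a connected configuration with no holes, then it never reaches a configuration with a hole.
   Context: Let $\Gamma$ be the triangular lattice; a configuration is a finite set of occupied vertices (''locations'') of $\Gamma$, each occupied by one particle; it is connected if the subgraph induced by occupied locations is connected. A hole is a maximal finite connected set of unoccupied locations. For a location $\ell$, $N(\ell)$ is the set of particles at locations adjacent to $\ell$. For adjacent $\ell,\ell'$, let $\mathbb{S}=N(\ell)\cap N(\ell')$ and $N(\ell\cup\ell')=(N(\ell)\cup N(\ell'))$ minus particles located at $\ell$ or $\ell'$. Property 1: $|\mathbb{S}|\in\{1,2\}$ and every particle in $N(\ell\cup\ell')$ is connected to a particle of $\mathbb{S}$ by a lattice path all of whose vertices are particles of $N(\ell\cup\ell')$. Property 2: $|\mathbb{S}|=0$; each of $\ell,\ell'$ has at least one adjacent particle other than one located at the other location; the particles of $N(\ell)$ not at $\ell'$ are connected by paths within this set; the particles of $N(\ell')$ not at $\ell$ are connected by paths within this set. One step of $\mathcal{M}$ (bias $\lambda>0$) from $\sigma$: choose a particle $P$ uniformly (location $\ell$), a neighbor $\ell'$ of $\ell$ uniformly among six, and $q$ uniform in $(0,1)$. If $\ell'$ is occupied, do nothing. Otherwise let $t$ (resp. $t'$) be the number of triangular faces incident to $\ell$ (resp. $\ell'$) with all three vertices occupied when $P$ is at $\ell$ (resp. at $\ell'$); move $P$ to $\ell'$ if (1) $\ell$ does not have exactly five occupied neighbors, (2) $\ell,\ell'$ satisfy Property 1 or 2, and (3) $q<\lambda^{t'-t}$; else do nothing. *)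

(* Defs.v *)
From HB Require Import structures.
From mathcomp Require Import all_boot all_order all_algebra.
From mathcomp Require Import finmap.
Set Implicit Arguments. Unset Strict Implicit. Unset Printing Implicit Defensive.
Import Order.TTheory GRing.Theory Num.Theory.
Local Open Scope ring_scope.
Local Open Scope fset_scope.

(* Vertices of the triangular lattice, in axial coordinates: (a,b) is the
   point a*e1 + b*e2 with e1 = (1,0), e2 = (1/2, sqrt 3 / 2). *)
Definition loc : Type := (int * int)%type.

(* The six unit directions, in cyclic (counterclockwise) order; consecutive
   directions (cyclically) span the six triangular faces around a vertex. *)
Definition dirs : seq (int * int) :=
  [:: (1, 0); (0, 1); (-1, 1); (-1, 0); (0, -1); (1, -1)]%R.

Definition shift (l : loc) (d : int * int) : loc := ((fst l + fst d)%R, (snd l + snd d)%R).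

Definition nbr (l : loc) (i : nat) : loc := shift l (nth (0, 0) dirs (i %% 6)%N).

Definition adj (x y : loc) : bool := ((fst y - fst x)%R, (snd y - snd x)%R) \in dirs.

Definition config := {fset loc}.

Definition connected_set (S : {fset loc}) : Prop :=
  forall a b, a \in S -> b \in S ->
    exists p : seq loc, [/\ path adj a p, all (fun x => x \in S) p & last a p = b].

Definition connected_config (s : config) : Prop := connected_set s.

(* A hole: a maximal finite connected set of unoccupied locations, i.e. a
   nonempty finite connected set H of unoccupied sites that is closed under
   taking unoccupied neighbours (a finite connected component of the
   complement of the configuration). *)
Definition is_hole (s : config) (H : {fset loc}) : Prop :=
  [/\ H != fset0,
      forall h, h \in H -> h \notin s,
      connected_set H &
      forall h l, h \in H -> adj h l -> l \notin s -> l \in H].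

Definition has_hole (s : config) : Prop := exists H : {fset loc}, is_hole s H.

Definition Nb (s : config) (l : loc) : {fset loc} := [fset x in s | adj l x].

Definition Scommon (s : config) (l l' : loc) : {fset loc} := Nb s l `&` Nb s l'.

Definition Nunion (s : config) (l l' : loc) : {fset loc} :=
  (Nb s l `|` Nb s l') `\` [fset l; l'].

Definition property1 (s : config) (l l' : loc) : Prop :=
  let S := Scommon s l l' in
  let U := Nunion s l l' in
  [/\ (#|` S| == 1)%N || (#|` S| == 2)%N &
      forall x, x \in U -> exists2 y, y \in S &
        exists p : seq loc, [/\ path adj x p, all (fun z => z \in U) p & last x p = y]].

Definition property2 (s : config) (l l' : loc) : Prop :=
  [/\ #|` Scommon s l l'| = 0%N,
      Nb s l `\ l' != fset0,
      Nb s l' `\ l != fset0,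
      connected_set (Nb s l `\ l') &
      connected_set (Nb s l' `\ l)].

(* number of triangular faces incident to v with all three vertices occupied
   (v itself is assumed occupied, i.e. v \in s) *)
Definition tri (s : config) (v : loc) : nat :=
  count (fun i => (nbr v i \in s) && (nbr v i.+1 \in s)) (iota 0 6).

Definition move (s : config) (l l' : loc) : config := l' |` (s `\ l).

(* One step of M with bias lambda, given the random choices: the particle
   at l (l \in s), the direction index i < 6 (so l' = nbr l i) and q in (0,1). *)

Definition can_move (R : realFieldType) (lambda : R) (s : config)
  (l l' : loc) (q : R) : Prop :=
  [/\ l' \notin s,
      #|` Nb s l| <> 5%N,
      property1 s l l' \/ property2 s l l' &
      q < lambda ^ ((tri (move s l l') l')%:Z - (tri s l)%:Z)].

(* Since q is uniform on (0,1) and the acceptance event is the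
   interval (0, lambda^(t'-t)) ∩ (0,1), existence of such a q is equivalent
   to positive probability of the transition. *)
Definition M_step (R : realFieldType) (lambda : R) (s tau : config) : Prop :=
  exists l i q, [/\ l \in s, (i < 6)%N, 0 < q, q < 1 &
    let l' := nbr l i in
    (can_move lambda s l l' q /\ tau = move s l l') \/
    (~ can_move lambda s l l' q /\ tau = s)].

Inductive M_reachable (R : realFieldType) (lambda : R) (s : config) : config -> Prop :=
| M_refl : M_reachable lambda s s
| M_next : forall t u, M_reachable lambda s t -> M_step lambda t u ->
    M_reachable lambda s u.

(* Main.v *)
Require Import Defs.
From mathcomp Require Import all_boot all_order all_algebra.
From mathcomp Require Import finmap.
From mathcomp Require Import ring.
From Stdlib Require Import Classical.
Set Implicit Arguments. Unset Strict Implicit. Unset Printing Implicit Defensive.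
Import GRing.Theory.
Local Open Scope fset_scope.

Definition succ8 (x : nat) : nat := if x == 7 then 0 else x.+1.
Definition cycn (x m : nat) : bool := (m == succ8 x) || (x == succ8 m).
Definition rl (b : nat -> bool) : rel nat := fun x y => [&& y < 8, b y & cycn x y].
Definition stepR (b : nat -> bool) (S : seq nat) :=
  S ++ [seq m <- iota 0 8 | [&& m \notin S, b m & has (fun x => cycn x m) S]].
Definition cl b k := iter 8 (stepR b) [:: k].
Definition closedb b k :=
  let c := cl b k in all (fun x => all (fun m => rl b x m ==> (m \in c)) (iota 0 8)) c.

Definition l5 := [:: 0; 1; 2; 3; 4].
Definition p5 := [:: 4; 5; 6; 7; 0].
Definition reach b j k := k \in cl b j.
Definition P1b (o : nat -> bool) := (o 0 || o 4) &&
  all (fun j => o j ==> ((o 0 && reach o j 0) || (o 4 && reach o j 4))) (iota 0 8).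
Definition P2b (o : nat -> bool) := [&& ~~ o 0, ~~ o 4, has o [:: 1; 2; 3], has o [:: 5; 6; 7],
  all (fun j => all (fun k => (o j && o k) ==> reach o j k) [:: 1; 2; 3]) [:: 1; 2; 3] &
  all (fun j => all (fun k => (o j && o k) ==> reach o j k) [:: 5; 6; 7]) [:: 5; 6; 7]].
Definition N5b (o : nat -> bool) := all o l5.
Definition Qb (o : nat -> bool) (A B : seq nat) :=
  let em := fun j => ~~ o j in
  all (fun e => all (fun f => (~~ o e && ~~ o f) ==>
    (reach em e f || (has (fun a => ~~ o a && reach em e a) B &&
                      has (fun a => ~~ o a && reach em f a) B))) A) A.
Definition checkb (bs : seq bool) :=
  let o := nth false bs in
  all (fun k => closedb o k && closedb (fun j => ~~ o j) k) (iota 0 8) &&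
  (((P1b o || P2b o) && ~~ N5b o) ==> (Qb o p5 l5 && Qb o l5 p5)).
Fixpoint allbs (n : nat) : seq (seq bool) :=
  if n is n'.+1 then [seq b :: x | b <- [:: true; false], x <- allbs n'] else [:: [::]].

Lemma allcheck : all checkb (allbs 8).
Proof. vm_cast_no_check (erefl true). Qed.

Lemma mem_allbs bs : bs \in allbs (size bs).
Proof.
elim: bs => [|b bs IH] //=.
have := @allpairs_f _ _ _ (fun b x => b :: x) [:: true; false] (allbs (size bs)) b bs.
by apply; [case: b|].
Qed.

Lemma iter_sub b S x n : x \in S -> x \in iter n (stepR b) S.
Proof. elim: n => [|n IH] //= /IH; by rewrite /stepR mem_cat => ->. Qed.

Lemma cl_self b k : k \in cl b k.
Proof. by apply: iter_sub; rewrite inE. Qed.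

Lemma cl_sound b k m n : m \in iter n (stepR b) [:: k] ->
  exists p, path (rl b) k p /\ last k p = m.
Proof.
elim: n m => [|n IH] m /=.
  by rewrite inE => /eqP ->; exists [::].
rewrite /stepR mem_cat => /orP [/IH //|].
rewrite mem_filter => /andP [/and3P [_ bm /hasP [x xS cx]]].
rewrite mem_iota => /andP [_ m8].
have [p [pp lp]] := IH x xS.
exists (rcons p m); rewrite rcons_path last_rcons pp lp /rl /=; split => //.
by rewrite m8 bm cx.
Qed.

Lemma cl_complete b k x p : closedb b k -> x \in cl b k -> path (rl b) x p ->
  last x p \in cl b k.
Proof.
move=> cb; elim: p x => [|y p IH] x //= xc /andP [rxy pp].
apply: IH pp.
move: cb; rewrite /closedb => /allP /(_ x xc) /allP.
have y8 : y \in iota 0 8 by move: rxy => /and3P [y8 _ _]; rewrite mem_iota.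
by move/(_ y y8); rewrite rxy.
Qed.


Definition dv (j : nat) : int * int := nth (0, 0)%R dirs (j %% 6).
Definition addv (u v : int * int) : int * int := ((u.1 + v.1)%R, (u.2 + v.2)%R).
Definition vv (i m : nat) : int * int :=
  match m with
  | 0 => dv i.+1 | 1 => dv i.+2 | 2 => dv i.+3 | 3 => dv i.+4 | 4 => dv (i + 5)
  | 5 => addv (dv i) (dv (i + 5)) | 6 => addv (dv i) (dv i) | _ => addv (dv i) (dv i.+1) end.
Definition pos (l : loc) i m := shift l (vv i m).
Definition adjv (u v : int * int) : bool := ((v.1 - u.1)%R, (v.2 - u.2)%R) \in dirs.
Definition v0 : int * int := (0, 0)%R.

Definition gchk (i : nat) : bool :=
  [&& all (fun m => all (fun n => adjv (vv i m) (vv i n) == cycn m n) (iota 0 8)) (iota 0 8),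
      all (fun m => all (fun n => (vv i m == vv i n) ==> (m == n)) (iota 0 8)) (iota 0 8),
      all (fun m => (vv i m != v0) && (vv i m != dv i)) (iota 0 8),
      all (fun m => (adjv v0 (vv i m) == (m \in l5)) && (adjv (dv i) (vv i m) == (m \in p5))) (iota 0 8),
      all (fun w => (w == dv i) || has (fun m => w == vv i m) l5) dirs &
      all (fun w => (addv (dv i) w == v0) || has (fun m => addv (dv i) w == vv i m) p5) dirs].

Lemma gchk_ok : all gchk (iota 0 6).
Proof. vm_cast_no_check (erefl true). Qed.

Lemma gchkP i : i < 6 -> gchk i.
Proof. by move=> hi; apply: (allP gchk_ok); rewrite mem_iota. Qed.

Lemma adjS l u v : adj (shift l u) (shift l v) = adjv u v.
Proof.
rewrite /adj /shift /adjv /=.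
have -> : ((l.1 + v.1) - (l.1 + u.1) = v.1 - u.1)%R by ring.
have -> : ((l.2 + v.2) - (l.2 + u.2) = v.2 - u.2)%R by ring.
by [].
Qed.

Lemma shift0 l : shift l v0 = l.
Proof. by case: l => a b; rewrite /shift /= !addr0. Qed.

Lemma shift_inj l u v : shift l u = shift l v -> u = v.
Proof.
case: u v => a b [c d]; rewrite /shift /= => [[h1 h2]].
by rewrite (addrI _ h1) (addrI _ h2).
Qed.

Lemma shift_dec l y : y = shift l ((y.1 - l.1)%R, (y.2 - l.2)%R).
Proof. case: y l => a b [c d]; rewrite /shift /=; congr pair; ring. Qed.

Lemma shift_add l u v : shift (shift l u) v = shift l (addv u v).
Proof. case: l u v => a b [c d] [e f]; rewrite /shift /addv /=; congr pair; ring. Qed.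

Lemma nbrE l i : nbr l i = shift l (dv i).
Proof. by []. Qed.

Lemma adjv0 w : adjv v0 w = (w \in dirs).
Proof. by case: w => a b; rewrite /adjv /= !subr0. Qed.

Lemma dirs_opp w : w \in dirs -> ((- w.1)%R, (- w.2)%R) \in dirs.
Proof.
case: w => a b; rewrite /dirs !inE /=.
by move=> /orP[/eqP[-> ->]|/orP[/eqP[-> ->]|/orP[/eqP[-> ->]|/orP[/eqP[-> ->]|/orP[/eqP[-> ->]|/eqP[-> ->]]]]]].
Qed.

Lemma adj_sym x y : adj x y = adj y x.
Proof.
suff H : forall x y, adj x y -> adj y x.
  by apply/idP/idP => /H.
move=> {}x {}y; rewrite /adj => /dirs_opp /=.
by rewrite !opprB.
Qed.

Lemma adj_irr x : adj x x = false.
Proof. by rewrite /adj !subrr. Qed.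

Lemma mi8 m : m < 8 -> m \in iota 0 8.
Proof. by rewrite mem_iota. Qed.


Lemma F_adjpp (l : loc) (i : nat) (hi : i < 6) m n : m < 8 -> n < 8 -> adj (pos l i m) (pos l i n) = cycn m n.
Proof.
move=> /mi8 hm /mi8 hn; have /and5P [c1 _ _ _ /andP [_ _]] := gchkP hi.
by rewrite /pos adjS; move: c1 => /allP /(_ m hm) /allP /(_ n hn) /eqP.
Qed.

Lemma F_inj (l : loc) (i : nat) (hi : i < 6) m n : m < 8 -> n < 8 -> pos l i m = pos l i n -> m = n.
Proof.
move=> /mi8 hm /mi8 hn /shift_inj /eqP e; have /and5P [_ c2 _ _ /andP [_ _]] := gchkP hi.
by move: c2 => /allP /(_ m hm) /allP /(_ n hn); rewrite e => /eqP.
Qed.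

Lemma F_nl (l : loc) (i : nat) (hi : i < 6) m : m < 8 -> pos l i m != l.
Proof.
move=> /mi8 hm; have /and5P [_ _ c3 _ /andP [_ _]] := gchkP hi.
move: c3 => /allP /(_ m hm) /andP [h _]; apply: contra h => /eqP h.
by apply/eqP; apply: (@shift_inj l); rewrite shift0.
Qed.

Lemma F_nl' (l : loc) (i : nat) (hi : i < 6) m : m < 8 -> pos l i m != nbr l i.
Proof.
move=> /mi8 hm; have /and5P [_ _ c3 _ /andP [_ _]] := gchkP hi.
move: c3 => /allP /(_ m hm) /andP [_ h]; apply: contra h => /eqP h.
by apply/eqP; apply: (@shift_inj l).
Qed.

Lemma F_al (l : loc) (i : nat) (hi : i < 6) m : m < 8 -> adj l (pos l i m) = (m \in l5).
Proof.
move=> /mi8 hm; have /and5P [_ _ _ c4 /andP [_ _]] := gchkP hi.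
move: c4 => /allP /(_ m hm) /andP [/eqP <- _].
by rewrite -{1}(shift0 l) adjS.
Qed.

Lemma F_al' (l : loc) (i : nat) (hi : i < 6) m : m < 8 -> adj (nbr l i) (pos l i m) = (m \in p5).
Proof.
move=> /mi8 hm; have /and5P [_ _ _ c4 /andP [_ _]] := gchkP hi.
move: c4 => /allP /(_ m hm) /andP [_ /eqP <-].
by rewrite nbrE adjS.
Qed.

Lemma F_yl (l : loc) (i : nat) (hi : i < 6) y : adj l y -> y = nbr l i \/ exists2 m, m \in l5 & y = pos l i m.
Proof.
rewrite (shift_dec l y) -{1}(shift0 l) adjS adjv0.
set w := (_, _) => wd.
have /and5P [_ _ _ _ /andP [c5 _]] := gchkP hi.
move: c5 => /allP /(_ w wd) /orP [/eqP ->|/hasP [m ml /eqP ->]].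
  by left.
by right; exists m.
Qed.

Lemma F_yl' (l : loc) (i : nat) (hi : i < 6) y : adj (nbr l i) y -> y = l \/ exists2 m, m \in p5 & y = pos l i m.
Proof.
rewrite (shift_dec (nbr l i) y) -{1}(shift0 (nbr l i)) adjS adjv0.
set w := (_, _) => wd.
rewrite nbrE shift_add.
have /and5P [_ _ _ _ /andP [_ c6]] := gchkP hi.
move: c6 => /allP /(_ w wd) /orP [/eqP ->|/hasP [m ml /eqP ->]].
  by left; rewrite shift0.
by right; exists m.
Qed.

Definition connP (P : pred loc) x y :=
  exists p, [/\ path adj x p, all P p & last x p = y].

Lemma connP_refl P x : connP P x x.
Proof. by exists [::]. Qed.

Lemma connP_step (P : pred loc) x y : adj x y -> P y -> connP P x y.
Proof. by move=> a py; exists [:: y]; rewrite /= a py. Qed.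

Lemma connP_trans P x y z : connP P x y -> connP P y z -> connP P x z.
Proof.
move=> [p [pp ap <-]] [q [qp aq <-]].
by exists (p ++ q); rewrite cat_path all_cat last_cat pp qp ap aq.
Qed.

Lemma connP_sym (P : pred loc) x y : P x -> connP P x y -> connP P y x.
Proof.
move=> px [p [pp ap <-]].
exists (rev (belast x p)); split.
- by rewrite rev_path; rewrite (@eq_path _ _ adj) // => a b; rewrite adj_sym.
- rewrite all_rev; apply/allP => z /mem_belast; rewrite inE => /orP [/eqP -> //|].
  by move/(allP ap).
- by case: p {pp ap} => //= w p; rewrite rev_cons last_rcons.
Qed.

Lemma connP_mono (P Q : pred loc) x y : (forall z, P z -> Q z) -> connP P x y -> connP Q x y.
Proof.
move=> PQ [p [pp ap lp]]; exists p; split => //.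
by apply/allP => z /(allP ap) /PQ.
Qed.

Definition Bemp (s : config) l l' z := [&& z \notin s, z != l & z != l'].
Definition Elp (s : config) l l' a := [&& a \notin s, adj l a & a != l'].

Lemma hole_arg s l l' : l \in s -> l' \notin s ->
  (exists a, Elp s l l' a) ->
  (forall e f, Elp s l' l e -> Elp s l' l f -> connP (Bemp s l l') e f \/
     ((exists2 a, Elp s l l' a & connP (Bemp s l l') e a) /\
      (exists2 a, Elp s l l' a & connP (Bemp s l l') f a))) ->
  (forall e f, Elp s l l' e -> Elp s l l' f -> connP (Bemp s l l') e f \/
     ((exists2 a, Elp s l' l a & connP (Bemp s l l') e a) /\
      (exists2 a, Elp s l' l a & connP (Bemp s l l') f a))) ->
  ~ has_hole s -> ~ has_hole (move s l l').
Proof.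
move=> ls l's [a0 Ea0] Q1 Q2 nh [H [Hne Hn Hc Hcl]].
set s' := move s l l' in Hn Hcl.
have ins' x : (x \in s') = (x == l') || ((x != l) && (x \in s)).
  by rewrite /s' /move in_fset1U in_fsetD1.
have ll' : l != l' by apply: contraNneq l's => <-.
have l's' : l' \in s' by rewrite ins' eqxx.
have ls' : l \notin s' by rewrite ins' (negbTE ll') eqxx.
have Bn z : Bemp s l l' z -> z \notin s'.
  by case/and3P => zs zl zl'; rewrite ins' (negbTE zl') (negbTE zs) andbF.
have sB z : z \notin s -> z != l' -> Bemp s l l' z.
  move=> zs zl'; rewrite /Bemp zs zl' andbT /=.
  by apply: contraNneq zs => ->.
have EB a : Elp s l l' a -> Bemp s l l' a.
  by case/and3P => ??? ; apply: sB.
have EB' a : Elp s l' l a -> Bemp s l l' a.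
  case/and3P => as0 al _; apply: sB => //; by apply: contraTneq al => ->; rewrite adj_irr.
have Hns x : x \in H -> x != l -> x \notin s.
  move=> /Hn; rewrite ins' negb_or => /andP [_]; rewrite negb_and negbK.
  by move=> /orP [/eqP -> /eqP //|xs _].
have Hnl' x : x \in H -> x != l'.
  by move=> /Hn; apply: contraNneq => ->.
have Hpath x p : x \in H -> path adj x p -> all (fun z => z \notin s') p ->
    all (fun z => z \in H) p.
  elim: p x => //= z p IH x xH /andP [axz pp] /andP [zn an].
  have zH := Hcl x z xH axz zn.
  by rewrite zH (IH z).
have HB x y : x \in H -> connP (Bemp s l l') x y ->
    connP (fun z => (z \in H) && (z != l)) x y.
  move=> xH [p [pp ap lp]]; exists p; split => //.
  have aH := Hpath x p xH pp (sub_all Bn ap).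
  apply/allP => z zp; rewrite (allP aH z zp).
  by case/and3P: (allP ap z zp).
have HB1 x y : x \in H -> connP (Bemp s l l') x y -> y \in H.
  move=> xH C; have [p [_ ap <-]] := HB x y xH C.
  have := mem_last x p; rewrite inE => /orP [/eqP -> //|/(allP ap) /andP []//].
have El_n a : Elp s l l' a -> a \notin s' by move/EB/Bn.
have El_l a : Elp s l l' a -> a != l by case/EB/and3P.
set P := exists2 e, e \in H & Elp s l' l e.
have K1 : P -> forall e, Elp s l' l e -> e \in H.
  move=> [e0 e0H E0] e E.
  have Ee := EB' e E.
  case: (Q1 e0 e E0 E) => [C|[[a Ea Ca] [b Eb Cb]]]; first exact: HB1 C.
  have aH := HB1 _ _ e0H Ca.
  have lH : l \in H.
    by apply: (Hcl a) => //; rewrite adj_sym; case/and3P: Ea.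
  have bH : b \in H by apply: (Hcl l) => //; [case/and3P: Eb|apply: El_n].
  by apply: (HB1 b) => //; apply: connP_sym Cb.
have reroute (T : {fset loc}) : (forall x, x \in H -> x != l -> x \in T) ->
    (P -> l' \in T) -> forall x y, x \in H -> x != l -> y \in H -> y != l ->
    connP (fun z => z \in T) x y.
  move=> t1 t3.
  have toT x y : x \in H -> connP (Bemp s l l') x y -> connP (fun z => z \in T) x y.
    move=> xH C; apply: connP_mono (HB x y xH C) => z /andP [zH zl]; exact: t1.
  have Elx x : x \in H -> x != l -> adj x l -> Elp s l l' x.
    by move=> xH xl axl; rewrite /Elp Hns // adj_sym axl Hnl'.
  have main : forall n p x, size p <= n -> x \in H -> x != l -> path adj x p ->
      all (fun z => z \in H) p -> last x p != l ->
      connP (fun z => z \in T) x (last x p).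
    elim=> [|n IH] [|z p] x //=; first by move=> *; apply: connP_refl.
      by move=> *; apply: connP_refl.
    move=> sz xH xl /andP [axz pp] /andP [zH aH] lst.
    case: (eqVneq z l) => [zl|zl].
      subst z; case: p sz pp aH lst => [|w q] sz pp aH lst //=.
        by rewrite /= eqxx in lst.
      move: pp aH => /= /andP [alw pq] /andP [wH aq].
      have wl : w != l by apply: contraTneq alw => ->; rewrite adj_irr.
      have Cw := IH q w (ltnW sz) wH wl pq aq lst.
      apply: connP_trans Cw.
      have Ex := Elx x xH xl axz.
      have Ew : Elp s l l' w by rewrite /Elp Hns // alw Hnl'.
      case: (Q2 x w Ex Ew) => [C|[[e Ee Ce] [f Ef Cf]]]; first exact: toT C.
      have eH := HB1 _ _ xH Ce.
      have l'T : l' \in T by apply: t3; exists e.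
      have fH := HB1 _ _ wH Cf.
      have fl : f != l by case/and3P: (EB' f Ef).
      have el : e != l by case/and3P: (EB' e Ee).
      apply: connP_trans (toT _ _ xH Ce) _.
      apply: connP_trans (connP_step (P := fun z => z \in T) _ l'T) _.
        by rewrite adj_sym; case/and3P: Ee.
      apply: connP_trans (connP_step (P := fun z => z \in T) _ (t1 f fH fl)) _.
        by case/and3P: Ef.
      by apply: connP_sym (toT _ _ wH Cf); apply: t1.
    apply: connP_trans (connP_step (P := fun z => z \in T) axz (t1 z zH zl)) _.
    exact: IH.
  move=> x y xH xl yH yl.
  have [p [pp ap lp]] := Hc x y xH yH.
  rewrite -lp; apply: (main (size p)) => //; by rewrite lp.
have [h0 h0H] := fset0Pn H Hne.
have a0H : exists2 a, a \in H & a != l.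
  case: (eqVneq h0 l) => [e|]; last by exists h0.
  exists a0; last exact: El_l.
  by apply: (Hcl l) => //; [rewrite -e|case/and3P: Ea0|apply: El_n].
have finish (T : {fset loc}) : (forall x, x \in H -> x != l -> x \in T) ->
    (forall x, x \in T -> x = l' \/ (x \in H /\ x != l)) ->
    (P -> l' \in T) -> (l' \in T -> P) -> is_hole s T.
  move=> t1 t2 t3 t3'.
  have RR := reroute T t1 t3.
  split.
  - by apply/fset0Pn; case: a0H => a aH al; exists a; apply: t1.
  - by move=> h /t2 [->|[hH hl]] //; apply: Hns.
  - move=> x y xT yT.
    have cP : connP (fun z => z \in T) x y.
      case: (classic P) => [HP|nP].
        have toL : forall z, z \in T -> connP (fun z => z \in T) z l'.
          move=> z zT; case: (t2 z zT) => [->|[zH zl]]; first exact: connP_refl.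
          case: HP => e eH Ee.
          have el : e != l by case/and3P: (EB' e Ee).
          apply: connP_trans (RR z e zH zl eH el) _.
          by apply: connP_step; [rewrite adj_sym; case/and3P: Ee|apply: t3; exists e].
        apply: connP_trans (toL x xT) _.
        by apply: connP_sym (toL y yT); exact: yT.
      have nl' z : z \in T -> z \in H /\ z != l.
        by move=> zT; case: (t2 z zT) => // e; subst z; exfalso; apply: nP; apply: t3'.
      by case: (nl' x xT) => xH xl; case: (nl' y yT) => yH yl; apply: RR.
    by case: cP => p [pp ap lp]; exists p.
  - move=> h y hT ahy ys.
    case: (t2 h hT) => [e|[hH hl]].
      subst h.
      have Ey : Elp s l' l y.
        by rewrite /Elp ys ahy; apply: contraNneq ys => ->.
      have yH := K1 (t3' hT) y Ey.
      by apply: t1 => //; apply: contraNneq ys => ->.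
    case: (eqVneq y l') => [e|yl'].
      subst y; apply: t3; exists h => //.
      by rewrite /Elp Hns // adj_sym ahy.
    have yn : y \notin s' by rewrite ins' (negbTE yl') negb_and ys orbT.
    by apply: t1; [apply: (Hcl h)|apply: contraNneq ys => ->].
case: (classic P) => [HP|nP].
  apply: nh; exists (l' |` (H `\ l)); apply: finish.
  - by move=> x xH xl; rewrite in_fset1U in_fsetD1 xl xH orbT.
  - move=> x; rewrite in_fset1U in_fsetD1 => /orP [/eqP ->|/andP [xl xH]]; by [left|right].
  - by rewrite in_fset1U eqxx.
  - by [].
apply: nh; exists (H `\ l); apply: finish.
- by move=> x xH xl; rewrite in_fsetD1 xl xH.
- by move=> x; rewrite in_fsetD1 => /andP [xl xH]; right.
- by [].
- by rewrite in_fsetD1 => /andP [_ /Hnl']; rewrite eqxx.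
Qed.

Lemma l5_8 m : m \in l5 -> m < 8.
Proof. by rewrite !inE => /orP[/eqP->|/orP[/eqP->|/orP[/eqP->|/orP[/eqP->|/eqP->]]]]. Qed.
Lemma p5_8 m : m \in p5 -> m < 8.
Proof. by rewrite !inE => /orP[/eqP->|/orP[/eqP->|/orP[/eqP->|/orP[/eqP->|/eqP->]]]]. Qed.

Lemma lp_cover m : m < 8 -> (m \in l5) || (m \in p5).
Proof. by case: m => [|[|[|[|[|[|[|[|m]]]]]]]]. Qed.
Lemma mid_of (o : nat -> bool) m : m \in l5 -> o m -> ~~ o 0 -> ~~ o 4 -> m \in [:: 1; 2; 3].
Proof. by case: m => [|[|[|[|[|m]]]]] //= _ ->. Qed.
Lemma hi_of (o : nat -> bool) m : m \in p5 -> o m -> ~~ o 0 -> ~~ o 4 -> m \in [:: 5; 6; 7].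
Proof. by case: m => [|[|[|[|[|[|[|[|m]]]]]]]] //= _ ->. Qed.
Lemma mid_l5 m : m \in [:: 1; 2; 3] -> m \in l5.
Proof. by case: m => [|[|[|[|[|m]]]]]. Qed.
Lemma hi_p5 m : m \in [:: 5; 6; 7] -> m \in p5.
Proof. by case: m => [|[|[|[|[|[|[|[|m]]]]]]]]. Qed.

Lemma loc2idx l i (hi : i < 6) (b : nat -> bool) k p : closedb b k ->
  forall m0, m0 \in cl b k -> m0 < 8 -> path adj (pos l i m0) p ->
  (forall z, z \in p -> exists2 m, m < 8 & (z = pos l i m /\ b m)) ->
  forall m, m < 8 -> last (pos l i m0) p = pos l i m -> m \in cl b k.
Proof.
move=> cb; elim: p => [|z p IH] m0 m0c m08 /=.
  by move=> _ _ m m8 /(F_inj hi m08 m8) <-.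
move=> /andP [az pp] hz m m8 lst.
have [m1 m18 [ze bm1]] := hz z (mem_head _ _).
subst z.
apply: (IH m1) => //.
- have r : rl b m0 m1 by rewrite /rl m18 bm1 -(F_adjpp l hi m08 m18) az.
  by have := cl_complete (p := [:: m1]) cb m0c; rewrite /= r => /(_ isT).
- by move=> z zp; apply: hz; rewrite inE zp orbT.
Qed.

Lemma idx2loc_path l i (hi : i < 6) (b : nat -> bool) q : forall k, k < 8 -> path (rl b) k q ->
  [/\ path adj (pos l i k) (map (pos l i) q),
      (forall z, z \in map (pos l i) q -> exists2 j, j < 8 & (z = pos l i j /\ b j)) &
      last (pos l i k) (map (pos l i) q) = pos l i (last k q)].
Proof.
elim: q => [|m q IH] k k8 /=; first by split.
move=> /andP [/and3P [m8 bm ckm] pq].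
have [IH1 IH2 IH3] := IH m m8 pq.
split => //.
- by rewrite IH1 (F_adjpp l hi k8 m8) ckm.
- move=> z; rewrite inE => /orP [/eqP ->|/IH2 //]; by exists m.
Qed.

Lemma reach_conn s l i (hi : i < 6) (em : nat -> bool) j k : j < 8 ->
  (forall m, m < 8 -> em m -> pos l i m \notin s) -> k \in cl em j ->
  connP (Bemp s l (nbr l i)) (pos l i j) (pos l i k).
Proof.
move=> j8 emn kin.
have [q [pq lq]] := cl_sound kin.
have [P1 P2 P3] := idx2loc_path l hi j8 pq.
exists (map (pos l i) q); split => //; last by rewrite P3 lq.
apply/allP => z /P2 [m m8 [-> em_m]].
by rewrite /Bemp emn // F_nl // F_nl'.
Qed.

Lemma local_ok s l i : i < 6 -> l \in s -> nbr l i \notin s -> #|` Nb s l| <> 5 ->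
  property1 s l (nbr l i) \/ property2 s l (nbr l i) ->
  [/\ exists a, Elp s l (nbr l i) a,
      (forall e f, Elp s (nbr l i) l e -> Elp s (nbr l i) l f ->
         connP (Bemp s l (nbr l i)) e f \/
         ((exists2 a, Elp s l (nbr l i) a & connP (Bemp s l (nbr l i)) e a) /\
          (exists2 a, Elp s l (nbr l i) a & connP (Bemp s l (nbr l i)) f a))) &
      (forall e f, Elp s l (nbr l i) e -> Elp s l (nbr l i) f ->
         connP (Bemp s l (nbr l i)) e f \/
         ((exists2 a, Elp s (nbr l i) l a & connP (Bemp s l (nbr l i)) e a) /\
          (exists2 a, Elp s (nbr l i) l a & connP (Bemp s l (nbr l i)) f a)))].
Proof.
move=> hi ls l's n5 props.
pose bs := [seq pos l i m \in s | m <- iota 0 8].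
pose o := nth false bs.
have oE m : m < 8 -> o m = (pos l i m \in s).
  by move=> m8; rewrite /o /bs (nth_map 0) ?size_iota // nth_iota.
have := mem_allbs bs; rewrite size_map size_iota => /(allP allcheck).
rewrite /checkb -/o => /andP [/allP clo imp].
have clO k : k < 8 -> closedb o k by move=> /mi8 /clo /andP [].
have clE k : k < 8 -> closedb (fun j => ~~ o j) k by move=> /mi8 /clo /andP [].
set l' := nbr l i in l's props *.
have inNb t x : (x \in Nb s t) = (x \in s) && adj t x by rewrite /Nb !inE.
have inSc x : (x \in Scommon s l l') = [&& x \in s, adj l x & adj l' x].
  by rewrite /Scommon in_fsetI !inNb; case: (x \in s).
have inNu x : (x \in Nunion s l l') = [&& x != l, x != l', x \in s & (adj l x || adj l' x)].
  rewrite /Nunion in_fsetD !in_fsetU !in_fset1 !inNb negb_or.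
  by case: (x == l); case: (x == l'); case: (x \in s).
have posN m : m < 8 -> pos l i m != l' by move=> m8; apply: F_nl'.
have posL m : m < 8 -> pos l i m != l by move=> m8; apply: F_nl.
have hN5 : ~~ N5b o.
  apply/negP => /allP A5; apply: n5.
  have -> : Nb s l = [fset x in map (pos l i) l5].
    apply/fsetP => x; rewrite inNb in_fset.
    apply/andP/mapP => [[xs alx]|[m ml ->]].
      case: (F_yl hi alx) => [e|[m ml ->]]; last by exists m.
      by move: xs; rewrite e -/l' (negbTE l's).
    by rewrite -oE ?l5_8 // A5 // F_al ?l5_8.
  rewrite card_fseq undup_id ?size_map //.
  rewrite map_inj_in_uniq // => a b al bl.
  exact: (F_inj hi (l5_8 al) (l5_8 bl)).
have scom x : x \in Scommon s l l' -> exists2 m, (m == 0) || (m == 4) & x = pos l i m /\ o m.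
  rewrite inSc => /and3P [xs alx al'x].
  case: (F_yl hi alx) => [e|[m ml e]]; first by move: xs; rewrite e -/l' (negbTE l's).
  subst x; move: al'x; rewrite F_al' ?l5_8 // => mp.
  exists m; last by rewrite oE ?l5_8.
  by clear alx xs; move: ml mp; rewrite !inE; case: m => [|[|[|[|[|m]]]]].
have scom0 m : (m == 0) || (m == 4) -> o m -> pos l i m \in Scommon s l l'.
  move=> m04 om; have m8 : m < 8 by case/orP: m04 => /eqP ->.
  rewrite inSc -oE // om F_al // F_al' //.
  by case/orP: m04 => /eqP ->.
have nun x : x \in Nunion s l l' -> exists2 m, m < 8 & x = pos l i m /\ o m.
  rewrite inNu => /and4P [xl xl' xs /orP [a|a]].
    case: (F_yl hi a) => [e|[m ml e]]; first by rewrite e eqxx in xl'.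
    by exists m; [exact: l5_8|split => //; rewrite oE ?l5_8 // -e].
  case: (F_yl' hi a) => [e|[m ml e]]; first by rewrite e eqxx in xl.
  by exists m; [exact: p5_8|split => //; rewrite oE ?p5_8 // -e].
have hP : P1b o || P2b o.
  case: props => [[c12 P1c]|[c0 nl1 nl2 cn1 cn2]].
  - apply/orP; left; apply/andP; split.
    + apply/negPn/negP; rewrite negb_or => /andP [n0 n4].
      move: c12; have -> : Scommon s l l' = fset0.
        apply/fsetP => x; rewrite in_fset0; apply/negP => /scom [m m04 [_ om]].
        by case/orP: m04 om => /eqP ->; [rewrite (negbTE n0)|rewrite (negbTE n4)].
      by rewrite cardfs0.
    + apply/allP => j; rewrite mem_iota => /andP [_ j8]; apply/implyP => oj.
      have jN : pos l i j \in Nunion s l l'.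
        by rewrite inNu posL // posN // -oE // oj F_al // F_al' // lp_cover.
      have [y yS [p [pp ap lp]]] := P1c _ jN.
      have [m0 m04 [ye om0]] := scom y yS.
      have m08 : m0 < 8 by case/orP: m04 => /eqP ->.
      have vx : forall z, z \in p -> exists2 m, m < 8 & (z = pos l i m /\ o m).
        by move=> z /(allP ap) /nun.
      have r := loc2idx hi (clO j j8) (cl_self o j) j8 pp vx m08 (etrans lp ye).
      by case/orP: m04 om0 r => /eqP -> -> r; rewrite /reach r ?orbT.
  - have n0 : ~~ o 0.
      by apply/negP => o0; have := scom0 0 isT o0; rewrite (cardfs0_eq c0) in_fset0.
    have n4 : ~~ o 4.
      by apply/negP => o4; have := scom0 4 isT o4; rewrite (cardfs0_eq c0) in_fset0.
    apply/orP; right; rewrite /P2b n0 n4 !andTb.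
    have vx1 x : x \in Nb s l `\ l' -> exists2 m, m \in l5 & (x = pos l i m /\ o m).
      rewrite in_fsetD1 inNb => /and3P [xl' xs alx].
      case: (F_yl hi alx) => [e|[m ml e]]; first by rewrite e eqxx in xl'.
      by exists m => //; split => //; rewrite oE ?l5_8 // -e.
    have vx2 x : x \in Nb s l' `\ l -> exists2 m, m \in p5 & (x = pos l i m /\ o m).
      rewrite in_fsetD1 inNb => /and3P [xl' xs alx].
      case: (F_yl' hi alx) => [e|[m ml e]]; first by rewrite e eqxx in xl'.
      by exists m => //; split => //; rewrite oE ?p5_8 // -e.
    apply/and4P; split.
    + have [x xin] := fset0Pn _ nl1; have [m ml [_ om]] := vx1 x xin.
      by apply/hasP; exists m => //; exact: (mid_of ml om n0 n4).
    + have [x xin] := fset0Pn _ nl2; have [m ml [_ om]] := vx2 x xin.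
      by apply/hasP; exists m => //; exact: (hi_of ml om n0 n4).
    + apply/allP => j jm; apply/allP => k km; apply/implyP => /andP [oj ok].
      have j8 := l5_8 (mid_l5 jm); have k8 := l5_8 (mid_l5 km).
      have inj m : m \in [:: 1; 2; 3] -> o m -> pos l i m \in Nb s l `\ l'.
        move=> mm om; have m8 := l5_8 (mid_l5 mm).
        by rewrite in_fsetD1 inNb posN // -oE // om F_al // mid_l5.
      have [p [pp ap lp]] := cn1 _ _ (inj j jm oj) (inj k km ok).
      have vx : forall z, z \in p -> exists2 m, m < 8 & (z = pos l i m /\ o m).
        by move=> z /(allP ap) /vx1 [m /l5_8 m8 h]; exists m.
      rewrite /reach; have := loc2idx hi (clO j j8) (cl_self o j) j8 pp vx k8. apply; exact lp.
    + apply/allP => j jm; apply/allP => k km; apply/implyP => /andP [oj ok].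
      have j8 := p5_8 (hi_p5 jm); have k8 := p5_8 (hi_p5 km).
      have inj m : m \in [:: 5; 6; 7] -> o m -> pos l i m \in Nb s l' `\ l.
        move=> mm om; have m8 := p5_8 (hi_p5 mm).
        by rewrite in_fsetD1 inNb posL // -oE // om F_al' // hi_p5.
      have [p [pp ap lp]] := cn2 _ _ (inj j jm oj) (inj k km ok).
      have vx : forall z, z \in p -> exists2 m, m < 8 & (z = pos l i m /\ o m).
        by move=> z /(allP ap) /vx2 [m /p5_8 m8 h]; exists m.
      rewrite /reach; have := loc2idx hi (clO j j8) (cl_self o j) j8 pp vx k8; apply; exact lp.
have /andP [Q1b Q2b] := implyP imp (introT andP (conj hP hN5)).
have emn m : m < 8 -> ~~ o m -> pos l i m \notin s by move=> m8; rewrite oE.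
have RC j k : j < 8 -> k \in cl (fun j => ~~ o j) j -> connP (Bemp s l l') (pos l i j) (pos l i k).
  by move=> j8 kin; apply: (reach_conn (em := fun j => ~~ o j) hi j8 emn kin).
split.
- move: hN5; rewrite /N5b -has_predC => /hasP [m ml om].
  exists (pos l i m).
  by rewrite /Elp -oE ?l5_8 // (negbTE om) F_al ?l5_8 // ml posN ?l5_8.
- move=> e f /and3P [es ae el] /and3P [fs af fl].
  case: (F_yl' hi ae) => [ee|[m mp ee]]; first by rewrite ee eqxx in el.
  case: (F_yl' hi af) => [fe|[n np fe]]; first by rewrite fe eqxx in fl.
  subst e f.
  have m8 := p5_8 mp; have n8 := p5_8 np.
  have om : ~~ o m by rewrite oE.
  have on : ~~ o n by rewrite oE.
  move: Q1b => /allP /(_ m mp) /allP /(_ n np); rewrite om on => /implyP /(_ isT).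
  case/orP => [r|/andP [/hasP [a al /andP [oa ra]] /hasP [b bl /andP [ob rb]]]].
    by left; apply: RC.
  right; split.
  + exists (pos l i a); last by apply: RC.
    by rewrite /Elp -oE ?l5_8 // oa F_al ?l5_8 // al posN ?l5_8.
  + exists (pos l i b); last by apply: RC.
    by rewrite /Elp -oE ?l5_8 // ob F_al ?l5_8 // bl posN ?l5_8.
- move=> e f /and3P [es ae el] /and3P [fs af fl].
  case: (F_yl hi ae) => [ee|[m mp ee]]; first by rewrite ee eqxx in el.
  case: (F_yl hi af) => [fe|[n np fe]]; first by rewrite fe eqxx in fl.
  subst e f.
  have m8 := l5_8 mp; have n8 := l5_8 np.
  have om : ~~ o m by rewrite oE.
  have on : ~~ o n by rewrite oE.
  move: Q2b => /allP /(_ m mp) /allP /(_ n np); rewrite om on => /implyP /(_ isT).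
  case/orP => [r|/andP [/hasP [a al /andP [oa ra]] /hasP [b bl /andP [ob rb]]]].
    by left; apply: RC.
  right; split.
  + exists (pos l i a); last by apply: RC.
    by rewrite /Elp -oE ?p5_8 // oa F_al' ?p5_8 // al posL ?p5_8.
  + exists (pos l i b); last by apply: RC.
    by rewrite /Elp -oE ?p5_8 // ob F_al' ?p5_8 // bl posL ?p5_8.
Qed.

Local Open Scope ring_scope.

Theorem lemma5 (R : realFieldType) (lambda : R) (s0 : config) :
  0 < lambda ->
  connected_config s0 -> ~ has_hole s0 ->
  forall s : config, M_reachable lambda s0 s -> ~ has_hole s.
Proof.
move=> _ _ nh s r; elim: r => // t u _ IH [l [i [q [ls i6 _ _ st]]]].
case: st => [[[l's n5 props _] ->]|[_ ->]] //.
have [Ea Q1 Q2] := local_ok i6 ls l's n5 props.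
exact: hole_arg ls l's Ea Q1 Q2 IH.
Qed.
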